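(* Let $n=p_1^{m_1}\cdots p_k^{m_k}$ with $m_i>1$ for at least one $i$. Then: (1) The Laplacian spectrum of $\mathcal E_{\mathbb Z_n}(\mathscr U)$ consists of $N_I$ with multiplicity $n_I-1=\prod_{i\notin\Xi_I}m_i-1$ for each $I\in V(\mathscr G)$ with $n_I>1$, together with the $2^k-2$ eigenvalues of the symmetric matrix $C_L(\mathscr G)$ indexed by $V(\mathscr G)$ with $(C_L)_{II}=N_I$, $(C_L)_{IJ}=-\sqrt{n_In_J}$ if $I\sim J$ in $\mathscr G$, $0$ otherwise. (2) The signless Laplacian spectrum of $\mathcal E_{\mathbb Z_n}(\mathscr U)$ consists of $N_I$ with multiplicity $n_I-1$ for each $I\in V(\mathscr G)$, together with the eigenvalues of the matrix $C_Q(\mathscr G)$ with $(C_Q)_{II}=N_I$, $(C_Q)_{IJ}=\sqrt{n_In_J}$ if $I\sim J$ in $\mathscr G$, $0$ otherwise. (3) The normalized Laplacian spectrum of $\mathcal E_{\mathbb Z_n}(\mathscr U)$ consists of $1$ with multiplicity $\sum_{I\in V(\mathscr G)}(n_I-1)$, together with the eigenvalues of the matrix $C_{\mathscr L}(\mathscr G)$ with $(C_{\mathscr L})_{II}=1$, $(C_{\mathscr L})_{IJ}=-\sqrt{\frac{n_In_J}{N_IN_J}}$ if $I\sim J$ in $\mathscr G$, $0$ otherwise.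
   Context: Primes $p_1<\dots<p_k$, positive integers $m_i$. Nonzero proper ideals of $\mathbb Z_n$ are uniquely $\langle p_1^{r_1}\cdots p_k^{r_k}\rangle$, $0\le r_i\le m_i$, $(r_i)\ne(0,\dots,0),(m_1,\dots,m_k)$; essential iff $r_j\ne m_j$ for all $j$. Essential ideal graph $\mathcal E_{\mathbb Z_n}$: vertices nonzero proper ideals, distinct $I,K$ adjacent iff $I+K$ essential. $\mathscr U$ = nonzero proper nonessential ideals, $\mathcal E_{\mathbb Z_n}(\mathscr U)$ the induced subgraph. $\Xi_I=\{i:r_i=m_i\}$; $[I]=\{J\in\mathscr U:\Xi_J=\Xi_I\}$. $\mathscr G$: vertex set the $2^k-2$ ideals $\langle\prod_{i\in S}p_i^{m_i}\rangle$, $S$ nonempty proper subset of $\{1,\dots,k\}$, $I\sim J$ iff $\Xi_I\cap\Xi_J=\emptyset$. $n_I=|[I]|=\prod_{i\notin\Xi_I}m_i$ and $N_I=\sum_{J\in V(\mathscr G),\,\Xi_I\cap\Xi_J=\emptyset}n_J$. For a graph with adjacency matrix $A$ and degree matrix $D$: Laplacian $L=D-A$, signless Laplacian $Q=D+A$, normalized Laplacian $\mathscr L=D^{-1/2}LD^{-1/2}$. *)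

(* Defs.v *)
From HB Require Import structures.
From mathcomp Require Import all_boot all_order all_algebra.
Set Implicit Arguments. Unset Strict Implicit. Unset Printing Implicit Defensive.
Import Order.TTheory GRing.Theory Num.Theory.
Local Open Scope ring_scope.

(* Matrices are indexed by 'I_#|V| via
   enum_val (any ordering of V; characteristic polynomials do not depend on it). *)
Section GraphMatrices.
Variables (R : rcfType) (T : finType) (V : {set T}) (adj : rel T).

Definition vtx (i : 'I_#|V|) : T := enum_val i.

Definition adjmx : 'M[R]_#|V| := \matrix_(i, j) (adj (vtx i) (vtx j))%:R.

Definition deg (i : 'I_#|V|) : R := \sum_j adjmx i j.

Definition degmx : 'M[R]_#|V| := \matrix_(i, j) ((i == j)%:R * deg i).

Definition lapmx : 'M[R]_#|V| := degmx - adjmx.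
Definition slapmx : 'M[R]_#|V| := degmx + adjmx.

Definition degmx_isqrt : 'M[R]_#|V| :=
  \matrix_(i, j) ((i == j)%:R * (Num.sqrt (deg i))^-1).

Definition nlapmx : 'M[R]_#|V| := degmx_isqrt *m lapmx *m degmx_isqrt.
End GraphMatrices.

(* ---------- Ideals of Z_n, n = p_1^{m_1} ... p_k^{m_k} ----------
   By the context, ideals of Z_n are uniquely <p_1^{r_1}...p_k^{r_k}>,
   0 <= r_i <= m_i; we represent an ideal by its exponent vector r. *)
Section Ideals.
Variables (k : nat) (m : 'I_k -> nat).

Definition Mx : nat := \max_(i < k) m i.

Definition expv := {ffun 'I_k -> 'I_Mx.+1}.

Definition is_ideal (r : expv) : bool := [forall i, (r i <= m i)%N].

(* nonzero (r <> (m_1,..,m_k)) and proper (r <> (0,..,0)) *)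
Definition nonzero_proper (r : expv) : bool :=
  [&& is_ideal r, ~~ [forall i, (r i : nat) == 0%N]
    & ~~ [forall i, (r i : nat) == m i]].

Definition essential (r : expv) : bool := [forall j, (r j : nat) != m j].

Definition Xi (r : expv) : {set 'I_k} := [set i | (r i : nat) == m i].

(* <d> + <e> = <gcd(d,e)>: componentwise minimum of exponents *)
Definition idsum (r s : expv) : expv :=
  [ffun i => if (r i <= s i)%N then r i else s i].

Definition Uset : {set expv} :=
  [set r | nonzero_proper r && ~~ essential r].

Definition adjE : rel expv := fun r s => (r != s) && essential (idsum r s).

(* V(G): ideals < prod_{i in S} p_i^{m_i} >, S nonempty proper *)
Definition VG : {set expv} :=
  [set r in Uset | [forall i, ((r i : nat) == 0%N) || ((r i : nat) == m i)]].

Definition nI (r : expv) : nat := \prod_(i < k | i \notin Xi r) m i.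

Definition NI (r : expv) : nat :=
  \sum_(J in VG | [disjoint Xi r & Xi J]) nI J.

Definition vG (i : 'I_#|VG|) : expv := enum_val i.

Definition CL (R : rcfType) : 'M[R]_#|VG| :=
  \matrix_(i, j)
    if i == j then (NI (vG i))%:R
    else if [disjoint Xi (vG i) & Xi (vG j)]
         then - Num.sqrt ((nI (vG i))%:R * (nI (vG j))%:R) else 0.

Definition CQ (R : rcfType) : 'M[R]_#|VG| :=
  \matrix_(i, j)
    if i == j then (NI (vG i))%:R
    else if [disjoint Xi (vG i) & Xi (vG j)]
         then Num.sqrt ((nI (vG i))%:R * (nI (vG j))%:R) else 0.

Definition CNL (R : rcfType) : 'M[R]_#|VG| :=
  \matrix_(i, j)
    if i == j then 1
    else if [disjoint Xi (vG i) & Xi (vG j)]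
         then - Num.sqrt (((nI (vG i))%:R * (nI (vG j))%:R)
                          / ((NI (vG i))%:R * (NI (vG j))%:R)) else 0.
End Ideals.

Arguments adjE [k] m _ _.
Arguments NI [k] m r.
Arguments nI [k] m r.
Arguments Xi [k] m r.

(* Main.v *)
Require Import Defs.
From HB Require Import structures.
From mathcomp Require Import all_boot all_order all_algebra zify ring.
Set Implicit Arguments. Unset Strict Implicit. Unset Printing Implicit Defensive.
Import Order.TTheory GRing.Theory Num.Theory.
Local Open Scope ring_scope.

Section Gen.
Variable R : rcfType.

Lemma horner_char_poly n (A : 'M[R]_n) a : (char_poly A).[a] = \det (a%:M - A).
Proof.
rewrite -horner_evalE /char_poly -det_map_mx; congr (\det _).
apply/matrixP => i j; rewrite !mxE /horner_evalE.
by case: (i == j); rewrite rmorphB rmorphMn /= !horner_evalE hornerX hornerC.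
Qed.

Lemma poly_eq_off (s : seq R) (p q : {poly R}) :
  (forall x, x \notin s -> p.[x] = q.[x]) -> p = q.
Proof.
move=> H; apply/eqP; rewrite -subr_eq0; apply/negPn/negP => nz.
set r := p - q.
set L := [seq x <- [seq (i%:R : R) | i <- iota 0 (size r + size s)] | x \notin s].
have uL : uniq L.
  apply: filter_uniq; rewrite map_inj_uniq ?iota_uniq //.
  by move=> i j /eqP; rewrite eqr_nat => /eqP.
have aL : all (root r) L.
  apply/allP => x; rewrite mem_filter => /andP[xs _].
  by rewrite /root /r hornerD hornerN H // subrr.
have := max_poly_roots nz aL uL.
set T := [seq (i%:R : R) | i <- iota 0 (size r + size s)].
have sT : size T = (size r + size s)%N by rewrite size_map size_iota.
have hT : uniq T by rewrite map_inj_uniq ?iota_uniq // => i j /eqP; rewrite eqr_nat => /eqP.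
have hc : (count (mem s) T <= size s)%N.
  rewrite -size_filter uniq_leq_size ?filter_uniq //.
  by move=> x; rewrite mem_filter => /andP[].
have hp := count_predC (mem s) T.
have -> : size L = count (predC (mem s)) T by rewrite /L size_filter.
change (size (p - q)) with (size r); move: (count _ T) (count _ T) (size r) (size s) (size T) sT hc hp => a b c d e; lia.
Qed.
Lemma schur n m (A Ai : 'M[R]_n) (B : 'M[R]_(n,m)) (C : 'M[R]_(m,n)) :
  A *m Ai = 1%:M -> \det (A - B *m C) = \det A * \det (1%:M - C *m Ai *m B).
Proof.
move=> hA.
have e1 : block_mx A B C 1%:M =
   block_mx 1%:M B 0 1%:M *m block_mx (A - B *m C) 0 C 1%:M.
  by rewrite mulmx_block !mul1mx !mul0mx !mulmx1 !add0r subrK.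
have e2 : block_mx A B C 1%:M =
   block_mx A 0 C 1%:M *m block_mx 1%:M (Ai *m B) 0 (1%:M - C *m Ai *m B).
  by rewrite mulmx_block !mul1mx !mul0mx !mulmx1 ?add0r ?addr0 mulmxA hA mul1mx mulmxA addrC subrK.
have := congr1 determinant e1; rewrite {1}e2 !det_mulmx det_ublock det_lblock det_lblock det_ublock !det1.
by rewrite !mul1r !mulr1 => ->.
Qed.

Lemma diag_inv n (d : 'I_n -> R) : (forall i, d i != 0) ->
  diag_mx (\row_i d i) *m diag_mx (\row_i (d i)^-1) = 1%:M.
Proof.
move=> hd; apply/matrixP => i j; rewrite mul_diag_mx !mxE.
by case: (i == j); rewrite ?mulr0n ?mulr0 // divff.
Qed.

Lemma sum_ind m (c : 'I_m) (g : 'I_m -> R) : \sum_a ((c == a)%:R * g a) = g c.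
Proof.
rewrite (bigD1 c) //= eqxx mul1r big1 ?addr0 // => a.
by rewrite eq_sym => /negPf ->; rewrite mul0r.
Qed.

Lemma sum_indr m (c : 'I_m) (h g : 'I_m -> R) :
  \sum_a ((c == a)%:R * h a * g a) = h c * g c.
Proof. by rewrite -(sum_ind c (fun a => h a * g a)); apply: eq_bigr => a _; rewrite mulrA. Qed.

Lemma sum_indl m (c : 'I_m) (h g : 'I_m -> R) :
  \sum_a (g a * ((c == a)%:R * h a)) = g c * h c.
Proof. by rewrite -(sum_ind c (fun a => g a * h a)); apply: eq_bigr => a _; rewrite mulrCA. Qed.

Section Blow.
Variables (n m : nat) (cls : 'I_n -> 'I_m) (del : 'I_m -> R) (G : 'M[R]_m).
Definition csz J := #|[pred u | cls u == J]|.
Hypothesis hs : forall J, (0 < csz J)%N.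

Lemma class_sum (f : 'I_m -> R) : \sum_u f (cls u) = \sum_J (csz J)%:R * f J.
Proof.
rewrite (partition_big cls predT) //=; apply: eq_bigr => J _.
rewrite (eq_bigr (fun _ => f J)); last by move=> u /eqP->.
by rewrite sumr_const mulr_natl.
Qed.

Lemma class_prod (f : 'I_m -> R) : \prod_u f (cls u) = \prod_J f J ^+ csz J.
Proof.
rewrite (partition_big cls predT) //=; apply: eq_bigr => J _.
rewrite (eq_bigr (fun _ => f J)); last by move=> u /eqP->.
by rewrite prodr_const.
Qed.

Definition Mb : 'M[R]_n := \matrix_(u,v) ((u==v)%:R * del (cls u) + G (cls u) (cls v)).
Definition Qb : 'M[R]_m := \matrix_(I,J) ((I==J)%:R * del I
   + Num.sqrt (csz I)%:R * G I J * Num.sqrt (csz J)%:R).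

Lemma blowup : char_poly Mb = \prod_J ('X - (del J)%:P)^+(csz J - 1) * char_poly Qb.
Proof.
apply: (@poly_eq_off [seq del J | J <- enum 'I_m]) => x hx.
have hxd J : x - del J != 0.
  rewrite subr_eq0; apply: contra hx => /eqP->.
  by apply: map_f; rewrite mem_enum.
rewrite hornerM horner_prod !horner_char_poly.
under eq_bigr => J _ do rewrite horner_exp hornerXsubC.
pose sq := fun J => Num.sqrt (csz J)%:R : R.
have sqsq J : sq J * sq J = (csz J)%:R by rewrite -expr2 sqr_sqrtr ?ler0n.
have sq0 J : sq J != 0 by rewrite sqrtr_eq0 -ltNge ltr0n hs.
pose F : 'M[R]_(n,m) := \matrix_(u,J) ((cls u == J)%:R / sq J).
pose H : 'M[R]_m := \matrix_(I,J) (sq I * G I J * sq J).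
pose Dn := diag_mx (\row_u (x - del (cls u))).
pose Dni := diag_mx (\row_u (x - del (cls u))^-1).
have eFHF u v : (F *m (H *m F^T)) u v = G (cls u) (cls v).
  rewrite !mxE.
  under eq_bigr => a _ do rewrite !mxE.
  under eq_bigr => a _ do under eq_bigr => b _ do rewrite !mxE.
  under eq_bigr => a _ do rewrite sum_indl.
  by rewrite sum_indr mulfK // mulKf.
have eM : x%:M - Mb = Dn - F *m (H *m F^T).
  apply/matrixP => u v; rewrite [in RHS]mxE [X in _ = _ + X]mxE eFHF !mxE.
  have [->|ne] := eqVneq u v; rewrite ?eqxx ?(negPf ne) ?mulr1n ?mulr0n ?mul1r ?mul0r ?add0r ?opprD ?sub0r ?addrA //.
have eAi : Dn *m Dni = 1%:M by apply: diag_inv => u; rewrite hxd.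
rewrite eM (schur _ _ eAi).
have dDn : \det Dn = \prod_J (x - del J) ^+ csz J.
  by rewrite det_diag -class_prod; apply: eq_bigr => u _; rewrite mxE.
pose Dm := diag_mx (\row_J (x - del J)).
pose Dmi := diag_mx (\row_J (x - del J)^-1).
have eK : H *m F^T *m Dni *m F = H *m Dmi.
  rewrite -!mulmxA; congr (H *m _); apply/matrixP => I J.
  rewrite !mxE.
  under eq_bigr => u _ do rewrite mul_diag_mx !mxE.
  rewrite (class_sum (fun K => (K == I)%:R / sq I * ((x - del K)^-1 * ((K == J)%:R / sq J)))).
  rewrite (bigD1 I) //= big1 ?addr0 ?eqxx; last by move=> K /negPf ->; rewrite !mul0r mulr0.
  have [<-|ne] := eqVneq I J; last first.
    by rewrite /= !mul0r !mulr0 mulr0n.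
  by rewrite /= mulr1n -sqsq; field; rewrite hxd sq0.
have eDm : Dm *m Dmi = 1%:M by apply: diag_inv.
have eQ : Dm - H = x%:M - Qb.
  apply/matrixP => I J; rewrite !mxE.
  have [<-|ne] := eqVneq I J.
    by rewrite /= !mulr1n mul1r opprD addrA.
  by rewrite /= !mulr0n mul0r !add0r.
rewrite dDn eK -eDm -mulmxBl det_mulmx det_diag eQ.
rewrite [\det _ * _]mulrC mulrA; congr (_ * _).
rewrite -big_split /=; apply: eq_bigr => J _.
by rewrite mxE subn1 -{1}(prednK (hs J)) exprSr mulfK.
Qed.
End Blow.

End Gen.

Lemma disjP (T : finType) (A B : {set T}) :
  reflect (forall x, x \in A -> x \notin B) [disjoint A & B].
Proof.
rewrite disjoint_subset; apply: (iffP subsetP) => H x /H; by rewrite !inE.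
Qed.

Section Comb.
Variables (k : nat) (m : 'I_k -> nat).
Hypothesis hm : forall i, (0 < m i)%N.

Local Notation ev := (expv m).

Definition cl (r : ev) : ev := [ffun i => if (r i : nat) == m i then r i else ord0].

Lemma Xi_cl r : Xi m (cl r) = Xi m r.
Proof.
apply/setP => i; rewrite !inE ffunE; case h: ((r i : nat) == m i); first by rewrite h.
by apply/negbTE; rewrite eq_sym neq_ltn hm orbT.
Qed.

Lemma UsetP (r : ev) : reflect
  [/\ forall i, (r i <= m i)%N, exists i, (r i : nat) == m i & exists i, (r i : nat) != m i]
  (r \in Uset m).
Proof.
rewrite inE /nonzero_proper /essential /is_ideal.
apply: (iffP idP).
  case/andP => /and3P [/forallP h1 _ /forallPn [i hi]] /forallPn [j hj].
  by split => //; [exists j; exact/negPn | exists i].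
case=> h1 [j hj] [i hi]; apply/andP; split; [apply/and3P; split|].
- exact/forallP.
- apply/forallPn; exists j; rewrite (eqP hj) -lt0n hm //.
- by apply/forallPn; exists i.
- by apply/forallPn; exists j; rewrite hj.
Qed.

Lemma VGP (r : ev) : reflect (r \in Uset m /\ forall i, ((r i : nat) == 0%N) || ((r i : nat) == m i))
  (r \in VG m).
Proof. by rewrite !inE; apply: (iffP andP) => -[h1 /forallP h2]; split; rewrite ?inE. Qed.

Lemma cl_VG (r : ev) : r \in Uset m -> cl r \in VG m.
Proof.
case/UsetP => h1 [j hj] [i hi]; apply/VGP; split; last first.
  by move=> l; rewrite ffunE; case h: ((r l : nat) == m l); rewrite ?h ?orbT.
apply/UsetP; split.
- by move=> l; rewrite ffunE; case h: ((r l : nat) == m l); rewrite ?(eqP h).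
- by exists j; rewrite ffunE hj.
- by exists i; rewrite ffunE (negPf hi) /= eq_sym -lt0n hm.
Qed.

Lemma cl_id (J : ev) : J \in VG m -> cl J = J.
Proof.
case/VGP => _ h; apply/ffunP => i; rewrite ffunE.
case h2: ((J i : nat) == m i) => //; move: (h i); rewrite h2 orbF => /eqP h0.
by apply: val_inj; rewrite /= h0.
Qed.

Lemma cl_eq (r s : ev) : Xi m r = Xi m s -> cl r = cl s.
Proof.
move/setP => h; apply/ffunP => i; rewrite !ffunE; have := h i; rewrite !inE => ->.
case h2: ((s i : nat) == m i) => //.
apply: val_inj => /=; rewrite (eqP h2); move: (h i); rewrite !inE h2 => /eqP //.
Qed.

Lemma Xi_Uset (r : ev) : r \in Uset m -> exists i, i \in Xi m r.
Proof. by case/UsetP => _ [j hj] _; exists j; rewrite inE. Qed.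

Lemma adj_Uset (r s : ev) : r \in Uset m -> s \in Uset m ->
  adjE m r s = [disjoint Xi m r & Xi m s].
Proof.
move=> hr hs; rewrite /adjE /essential.
have [h1 _ _] := UsetP _ hr; have [h2 _ _] := UsetP _ hs.
have -> : [forall j, (idsum r s j : nat) != m j] = [disjoint Xi m r & Xi m s].
  apply/forallP/disjP => [H i|H i].
    rewrite !inE => /eqP hi; apply/negP => /eqP hs'; move: (H i).
    by rewrite ffunE hi hs' leqnn hi eqxx.
  rewrite ffunE; case: ifP => hl.
    apply/negP => /eqP e; have := H i; rewrite !inE e eqxx /= => /(_ isT).
    by rewrite eqn_leq h2 /= -e hl.
  apply/negP => /eqP e; have := H i; rewrite !inE e eqxx /=.
  rewrite eqn_leq h1 /= -e ltnW ?ltnNge ?hl // => /(_ isT) //.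
case: (boolP [disjoint _ & _]) => hd; rewrite ?andbF ?andbT //.
apply/negP => /eqP e; subst s; have [i hi] := Xi_Uset hr.
by move/disjP: hd => /(_ i hi); rewrite hi.
Qed.

Lemma card_lt N c : (c <= N)%N -> #|[pred a : 'I_N | (a < c)%N]| = c.
Proof.
move=> h; rewrite -{2}(card_ord c).
have inj : injective (widen_ord h) by move=> a b /(congr1 val) e; exact: val_inj.
rewrite -(card_codom inj); apply: eq_card => a; rewrite inE.
apply/idP/codomP => [ha|[b ->]]; last by rewrite /= ltn_ord.
by exists (Ordinal ha); apply: val_inj.
Qed.

Lemma card_class (J : ev) : J \in VG m -> #|[pred r in Uset m | cl r == J]| = nI m J.
Proof.
move=> hJ; have hJU : J \in Uset m by case/VGP: hJ.
pose F := fun i : 'I_k => if i \in Xi m J then pred1 (J i)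
   else [pred a : 'I_(Mx m).+1 | (a < m i)%N].
have eF : [pred r in Uset m | cl r == J] =i (family F : simpl_pred ev).
  move=> r; rewrite inE; apply/andP/familyP => [[hr /eqP hc] i|H].
    have hX : Xi m r = Xi m J by rewrite -hc Xi_cl.
    have [h1 _ _] := UsetP _ hr.
    rewrite /F; case: ifP => hi.
      rewrite inE; apply/eqP/ord_inj; move: hi; rewrite -{1}hX !inE => /eqP e.
      by rewrite -hc ffunE e eqxx.
    rewrite inE ltn_neqAle h1 andbT; move: hi; rewrite -hX inE => /negbT //.
  have hX : Xi m r = Xi m J.
    apply/setP => i; have := H i; rewrite /F !inE; case: ifP => hi.
      by move/eqP->.
    by move=> hl; rewrite ltn_eqF.
  split; last by rewrite (cl_eq hX) cl_id.
  apply/UsetP; split.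
  - move=> i; have := H i; rewrite /F; case: ifP => hi; rewrite inE.
      by move/eqP->; move: hi; rewrite inE => /eqP->.
    by move/ltnW.
  - have [i hi] := Xi_Uset hJU; exists i; rewrite -hX in hi; by rewrite inE in hi.
  - have [_ _ [i hi]] := UsetP _ hJU; exists i; have := H i; rewrite /F inE (negPf hi) /=.
    by rewrite inE => /ltn_eqF ->.
rewrite (eq_card eF) card_family foldrE big_image /nI [RHS]big_mkcond /=.
apply: eq_bigr => i _; rewrite /F; case: ifP => hi /=; first by rewrite card1.
rewrite card_lt // leqW //; exact: (leq_bigmax i).
Qed.

Lemma nI_gt0 (J : ev) : (0 < nI m J)%N.
Proof. by rewrite /nI prodn_gt0 // => i; rewrite hm. Qed.

Lemma NI_gt0 (J : ev) : J \in VG m -> (0 < NI m J)%N.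
Proof.
move=> hJ; have hJU : J \in Uset m by case/VGP: hJ.
pose J' : ev := [ffun i => if i \in Xi m J then ord0 else inord (m i)].
have vJ' i : (J' i : nat) = if i \in Xi m J then 0%N else m i.
  rewrite ffunE; case: ifP => // _; rewrite inordK // ltnS; exact: (leq_bigmax i).
have hJ' : J' \in VG m.
  apply/VGP; split; last by move=> i; rewrite vJ'; case: ifP; rewrite ?eqxx ?orbT.
  apply/UsetP; split.
  - by move=> i; rewrite vJ'; case: ifP.
  - have [_ _ [i hi]] := UsetP _ hJU; exists i; rewrite vJ' inE (negPf hi) //.
  - have [i hi] := Xi_Uset hJU; exists i; rewrite vJ' hi eq_sym -lt0n hm //.
have hd : [disjoint Xi m J & Xi m J'].
  apply/disjP => i hi; rewrite inE vJ' hi eq_sym -lt0n hm //.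
rewrite /NI (bigD1 J') /=; last by rewrite hJ' hd.
by rewrite (leq_trans (nI_gt0 J')) // leq_addr.
Qed.

End Comb.

Unset Implicit Arguments.
Theorem mainTheorem9 (R : rcfType) (k : nat) (p m : 'I_k -> nat)
  (hp : forall i, prime (p i))
  (hinc : forall i j : 'I_k, (i < j)%N -> (p i < p j)%N)
  (hm : forall i, (0 < m i)%N)
  (hm1 : exists i, (1 < m i)%N) :
  [/\ char_poly (lapmx R (Uset m) (adjE m)) =
        (\prod_(I in VG m) ('X - ((NI m I)%:R)%:P) ^+ (nI m I - 1)) * char_poly (CL m R),
      char_poly (slapmx R (Uset m) (adjE m)) =
        (\prod_(I in VG m) ('X - ((NI m I)%:R)%:P) ^+ (nI m I - 1)) * char_poly (CQ m R)
    & char_poly (nlapmx R (Uset m) (adjE m)) =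
        ('X - 1) ^+ (\sum_(I in VG m) (nI m I - 1)) * char_poly (CNL m R)].
Proof.
pose cls := fun u : 'I_#|Uset m| => enum_rank_in (cl_VG hm (enum_valP u)) (cl (enum_val u)).
have vcls u : vG (cls u) = cl (enum_val u).
  exact: (enum_rankK_in (cl_VG hm (enum_valP u)) (cl_VG hm (enum_valP u))).
have Xcls u : Xi m (vG (cls u)) = Xi m (enum_val u) by rewrite vcls Xi_cl.
have hcsz J : csz cls J = nI m (vG J).
  rewrite /csz -card_class ?enum_valP // -(sum1_card [pred u | cls u == J]) -(sum1_card [pred r in Uset m | cl r == vG J]).
  rewrite (eq_bigl (fun r => (r \in Uset m) && (cl r == vG J))) //.
  rewrite big_enum_val_cond; apply: eq_bigl => u.
  by rewrite -vcls /vG (inj_eq enum_val_inj).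
have hs J : (0 < csz cls J)%N by rewrite hcsz nI_gt0.
have adjc u v : adjE m (enum_val u) (enum_val v) =
    [disjoint Xi m (vG (cls u)) & Xi m (vG (cls v))].
  by rewrite !Xcls adj_Uset ?enum_valP.
pose dj := fun I J : 'I_#|VG m| => [disjoint Xi m (vG I) & Xi m (vG J)].
have dj_refl I : dj I I = false.
  have hI : vG I \in Uset m by have /VGP[] := enum_valP I.
  have [i hi] := Xi_Uset hm hI.
  by apply/negbTE/negP => /disjP /(_ i hi); rewrite hi.
have hdeg u : deg R (adjE m) u = (NI m (vG (cls u)))%:R.
  rewrite /deg; under eq_bigr => v _ do rewrite /adjmx mxE /vtx adjc.
  rewrite (class_sum cls (fun J => (dj (cls u) J)%:R)) /NI natr_sum big_enum_val_cond.
  rewrite [RHS]big_mkcond; apply: eq_bigr => J _; rewrite hcsz /dj.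
  by case: ifP; rewrite ?mulr1 ?mulr0.
have hprod : \prod_J ('X - ((NI m (vG J))%:R)%:P)^+(csz cls J - 1) =
    \prod_(I in VG m) ('X - ((NI m I)%:R)%:P) ^+ (nI m I - 1) :> {poly R}.
  by symmetry; rewrite big_enum_val; apply: eq_bigr => J _; rewrite hcsz.
split.
- have eL : lapmx R (Uset m) (adjE m) =
     Mb cls (fun J => (NI m (vG J))%:R) (\matrix_(I,J) - (dj I J)%:R).
    by apply/matrixP => u v; rewrite !mxE hdeg /vtx adjc.
  rewrite eL blowup // hprod; congr (_ * char_poly _).
  apply/matrixP => I J; rewrite !mxE !hcsz.
  have [<-|ne] := eqVneq I J.
    by rewrite dj_refl /= mul1r oppr0 mulr0 mul0r addr0.
  rewrite /= mul0r add0r /dj; case: ifP => _ /=.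
    by rewrite mulrN1 mulNr sqrtrM ?ler0n.
  by rewrite oppr0 mulr0 mul0r.
- have eQ : slapmx R (Uset m) (adjE m) =
     Mb cls (fun J => (NI m (vG J))%:R) (\matrix_(I,J) (dj I J)%:R).
    by apply/matrixP => u v; rewrite !mxE hdeg /vtx adjc.
  rewrite eQ blowup // hprod; congr (_ * char_poly _).
  apply/matrixP => I J; rewrite !mxE !hcsz.
  have [<-|ne] := eqVneq I J.
    by rewrite dj_refl /= mul1r mulr0 mul0r addr0.
  rewrite /= mul0r add0r /dj; case: ifP => _ /=.
    by rewrite mulr1 sqrtrM ?ler0n.
  by rewrite mulr0 mul0r.
have hN J : (0 < NI m (vG J))%N by apply: NI_gt0 => //; exact: enum_valP.
pose sN := fun J => Num.sqrt ((NI m (vG J))%:R) : R.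
have sN0 J : sN J != 0 by rewrite sqrtr_eq0 -ltNge ltr0n hN.
have sNsN J : sN J * sN J = (NI m (vG J))%:R by rewrite -expr2 sqr_sqrtr ?ler0n.
have eNL : nlapmx R (Uset m) (adjE m) =
    Mb cls (fun _ => 1) (\matrix_(I,J) (- (dj I J)%:R / (sN I * sN J))).
  have eD : degmx_isqrt R (Uset m) (adjE m) =
      diag_mx (\row_u (Num.sqrt (deg R (adjE m) u))^-1).
    by apply/matrixP => u v; rewrite !mxE mulr_natl.
  rewrite /nlapmx eD mul_diag_mx mul_mx_diag; apply/matrixP => u v.
  rewrite !mxE !hdeg /vtx adjc -/(dj (cls u) (cls v)) -/(sN (cls u)) -/(sN (cls v)).
  have [<-|ne] := eqVneq u v.
    rewrite dj_refl /= mul1r mulr1 -sNsN; field; exact: sN0.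
  by rewrite /= mul0r add0r mul0r; field; rewrite !sN0.
rewrite eNL blowup // prodrXr polyC1.
have -> : (\sum_i (csz cls i - 1) = \sum_(I in VG m) (nI m I - 1))%N.
  by symmetry; rewrite big_enum_val; apply: eq_bigr => J _; rewrite hcsz.
congr (_ * char_poly _).
apply/matrixP => I J; rewrite !mxE !hcsz.
have [<-|ne] := eqVneq I J.
  by rewrite dj_refl /= mul1r oppr0 mul0r mulr0 mul0r addr0.
rewrite /= mul0r add0r /dj; case: ifP => _ /=.
  rewrite sqrtrM ?mulr_ge0 ?ler0n // sqrtrV ?mulr_ge0 ?ler0n // !sqrtrM ?ler0n // -/(sN I) -/(sN J).
  by field; rewrite !sN0.
by rewrite oppr0 mul0r mulr0 mul0r.
Qed.
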